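(* Let $K=2$ and suppose that for every horizon $T$ (a multiple of $100$) a valid pair $(\eta,\gamma)=(\eta_T,\gamma_T)$ in the non-trivial regime is chosen. Then there exists $T_0$ such that for all $T\ge T_0$ with $\Pr(\mathcal E_2)>0$, WSU-UX run on the two-phase loss sequence satisfies $$\Pr\Bigl(\pi_{T+1,1}\le\tfrac34\,\Bigm|\,\mathcal E_2\Bigr)\le\frac{75}{4}\,e^{-c\eta T},\qquad c=\tfrac{79}{400}.$$
   Context: WSU-UX. Fix integers $K\ge 2$ and $T\ge 1$ and hyperparameters $\eta,\gamma$. The pair $(\eta,\gamma)$ is called valid if $\eta,\gamma\in(0,1/2)$ and $\eta K/\gamma\le 1/2$. Given a fixed loss sequence $\ell_t\in[0,1]^K$, WSU-UX sets $\pi_{1,i}=1/K$ and in each round $t$: forms $\tilde\pi_{t,i}=(1-\gamma)\pi_{t,i}+\gamma/K$; draws $I_t$ with $\Pr(I_t=i\mid\mathcal F_{t-1})=\tilde\pi_{t,i}$; sets $\hat\ell_{t,i}=\ell_{t,i}\mathbf 1[I_t=i]/\tilde\pi_{t,i}$; and updates $\pi_{t+1,i}=\pi_{t,i}\bigl(1-\eta(\hat\ell_{t,i}-\sum_{j}\pi_{t,j}\hat\ell_{t,j})\bigr)$; $\mathcal F_t$ is the history generated by $I_1,\dots,I_t$. Non-trivial regime: $\eta\ge T^{-2/3}$ and $\gamma\le T^{-1/3}$. Two-phase loss sequence ($K=2$, $T$ a multiple of $100$): with $T_1=\frac{T}{100}$, $\ell_{t,1}=1,\ell_{t,2}=0$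 for $1\le t\le T_1$ and $\ell_{t,1}=0,\ell_{t,2}=1$ for $T_1<t\le T$. Further $T_2=\frac{2}{10}T$, and $\mathcal E_2$ denotes the event $\{\pi_{T_1+T_2+1,1}\ge\frac14\}$. *)

(* Defs.v *)
From HB Require Import structures.
From mathcomp Require Import all_boot all_order all_algebra.
From mathcomp Require Import reals sequences exp.
Set Implicit Arguments. Unset Strict Implicit. Unset Printing Implicit Defensive.
Import Order.TTheory GRing.Theory Num.Theory.
Local Open Scope ring_scope.

Section WSUUX.
Variables (R : realType) (K : nat).
Variables (eta gamma : R) (ell : nat -> 'I_K -> R).

Definition tilde_pi (p : 'I_K -> R) (i : 'I_K) : R :=
  (1 - gamma) * p i + gamma / K%:R.

Definition loss_hat (t : nat) (p : 'I_K -> R) (It i : 'I_K) : R :=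
  ell t i * (It == i)%:R / tilde_pi p i.

Definition wsu_step (t : nat) (p : 'I_K -> R) (It : 'I_K) : 'I_K -> R :=
  fun i => p i * (1 - eta * (loss_hat t p It i
                             - \sum_(j < K) p j * loss_hat t p It j)).

Definition pi_init : 'I_K -> R := fun _ => 1 / K%:R.

(* pi_run t p s: starting from pi_t = p and drawing the arms s in rounds
   t, t+1, ..., returns pi_{t + size s}. *)
Fixpoint pi_run (t : nat) (p : 'I_K -> R) (s : seq 'I_K) : 'I_K -> R :=
  match s with
  | [::] => p
  | It :: s' => pi_run t.+1 (wsu_step t p It) s'
  end.

(* pi_{n+1} along the history s = (I_1, I_2, ...) : uses I_1..I_n *)
Definition pi_at (s : seq 'I_K) (n : nat) : 'I_K -> R :=
  pi_run 1 pi_init (take n s).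

Fixpoint path_prob (t : nat) (p : 'I_K -> R) (s : seq 'I_K) : R :=
  match s with
  | [::] => 1
  | It :: s' => tilde_pi p It * path_prob t.+1 (wsu_step t p It) s'
  end.

Definition wsu_prob (T : nat) (A : pred (T.-tuple 'I_K)) : R :=
  \sum_(s : T.-tuple 'I_K | A s) path_prob 1 pi_init s.

End WSUUX.

Definition valid_pair (R : realType) (K : nat) (eta gamma : R) : Prop :=
  [/\ 0 < eta, eta < 1/2, 0 < gamma, gamma < 1/2 & eta * K%:R / gamma <= 1/2].

Definition nontrivial_regime (R : realType) (T : nat) (eta gamma : R) : Prop :=
  T%:R `^ (- (2/3)) <= eta /\ gamma <= T%:R `^ (- (1/3)).

(* Two-phase loss sequence, K = 2, arm 1 = ord0, arm 2 = ord_max *)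
Definition two_phase_loss (R : realType) (T : nat) (t : nat) (i : 'I_2) : R :=
  if (t <= T %/ 100)%N then (i == ord0)%:R else (i != ord0)%:R.

Definition T1 (T : nat) : nat := T %/ 100.
Definition T2 (T : nat) : nat := (2 * T) %/ 10.

(* Main.v *)
Require Import Defs.
From HB Require Import structures.
From mathcomp Require Import all_boot all_order all_algebra.
From mathcomp Require Import reals sequences exp.
From mathcomp Require Import ring lra zify.
Import Order.TTheory GRing.Theory Num.Theory.
Local Open Scope ring_scope.
Set Implicit Arguments. Unset Strict Implicit.

Lemma ord2P (i : 'I_2) : i = ord0 \/ i = ord_max.
Proof. case: i => [[|[|//]] Hi]; [left|right]; exact: val_inj. Qed.

Lemma sum2 (R : realType) (F : 'I_2 -> R) : \sum_(j < 2) F j = F ord0 + F ord_max.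
Proof. rewrite big_ord_recl big_ord1; congr (_ + F _); exact: val_inj. Qed.

Lemma sum_tuple_cons (R : realType) (I : finType) n (F : n.+1.-tuple I -> R) :
  \sum_(s : n.+1.-tuple I) F s = \sum_(i : I) \sum_(s : n.-tuple I) F [tuple of i :: s].
Proof.
rewrite pair_big /=.
rewrite (reindex (fun p : I * n.-tuple I => [tuple of p.1 :: p.2])) //=.
exists (fun s : n.+1.-tuple I => (thead s, [tuple of behead s])) => [[i s] _|s _] /=.
  by congr (_, _); apply: val_inj.
by apply: val_inj; rewrite /= [in RHS](tuple_eta s).
Qed.

Lemma sum_tuple0 (R : realType) (I : finType) (F : 0.-tuple I -> R) :
  \sum_(s : 0.-tuple I) F s = F [tuple].
Proof.
rewrite (big_pred1 [tuple]) // => s; apply/esym/eqP; apply: val_inj; by case: s => -[].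
Qed.

Section Dyn.
Variables (R : realType) (eta gamma : R) (ell : nat -> 'I_2 -> R).
Hypotheses (heta : 0 < eta) (hgam : 0 < gamma) (hgam1 : gamma < 1/2)
  (hratio : eta * 2%:R / gamma <= 1/2) (hell : forall t i, 0 <= ell t i <= 1).

Ltac hyps := have := heta; have := hgam; have := hgam1; move=> ? ? ?.

Definition Ex n t (p : 'I_2 -> R) (F : seq 'I_2 -> R) :=
  \sum_(s : n.-tuple 'I_2) path_prob eta gamma ell t p s * F s.

Lemma Ex_cons n t p F : Ex n.+1 t p F =
  \sum_(i : 'I_2) tilde_pi gamma p i *
     Ex n t.+1 (wsu_step eta gamma ell t p i) (fun s => F (i :: s)).
Proof.
rewrite /Ex sum_tuple_cons; apply: eq_bigr => i _.
rewrite big_distrr; apply: eq_bigr => s _ /=.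
by rewrite mulrA.
Qed.

Lemma Ex0 t p F : Ex 0 t p F = F [::].
Proof. by rewrite /Ex sum_tuple0 /= mul1r. Qed.

Definition inv (p : 'I_2 -> R) := [/\ 0 <= p ord0, 0 <= p ord_max & p ord0 + p ord_max = 1].

Lemma eta_le : eta <= gamma / 4%:R.
Proof.
hyps; move: hratio; rewrite ler_pdivrMr // => h.
rewrite ler_pdivlMr //; lra.
Qed.

Lemma tilde_gt0 p i : inv p -> gamma / 2%:R <= tilde_pi gamma p i.
Proof.
hyps; case=> h0 h1 hs; rewrite /tilde_pi.
have hp : 0 <= p i by case: (ord2P i) => ->.
have : 0 <= (1 - gamma) * p i by apply: mulr_ge0 => //; lra.
lra.
Qed.

Lemma tilde_sum p : inv p -> tilde_pi gamma p ord0 + tilde_pi gamma p ord_max = 1.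
Proof. case=> _ _ hs; rewrite /tilde_pi. 
have -> : (1 - gamma) * p ord0 + gamma / 2%:R + ((1 - gamma) * p ord_max + gamma / 2%:R)
  = (1 - gamma) * (p ord0 + p ord_max) + gamma by field.
rewrite hs; ring.
Qed.

Lemma lh_same t p i : loss_hat gamma ell t p i i = ell t i / tilde_pi gamma p i.
Proof. by rewrite /loss_hat eqxx mulr1. Qed.

Lemma lh_diff t p i j : i != j -> loss_hat gamma ell t p i j = 0.
Proof. by move=> h; rewrite /loss_hat (negbTE h) mulr0 mul0r. Qed.

Lemma step_sum t p It :
  \sum_(j < 2) p j * loss_hat gamma ell t p It j = p It * loss_hat gamma ell t p It It.
Proof.
rewrite sum2; case: (ord2P It) => ->.
  by rewrite (@lh_diff _ _ ord0 ord_max) // mulr0 addr0.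
by rewrite (@lh_diff _ _ ord_max ord0) // mulr0 add0r.
Qed.

Lemma etaL t p i : inv p -> 0 <= eta * loss_hat gamma ell t p i i <= 1/2.
Proof.
hyps; move=> hp; rewrite lh_same.
have hw := tilde_gt0 i hp.
have hw0 : 0 < tilde_pi gamma p i by apply: lt_le_trans hw; apply: divr_gt0.
have [hl0 hl1] := andP (hell t i).
apply/andP; split.
  by apply: mulr_ge0; [lra| apply: divr_ge0 => //; lra].
rewrite mulrA ler_pdivrMr //.
have := eta_le; rewrite ler_pdivlMr // => he.
nra.
Qed.

Lemma step_inv t p i : inv p -> inv (wsu_step eta gamma ell t p i).
Proof.
move=> hp; have := etaL t i hp; move: hp.
rewrite /inv /wsu_step step_sum.
case: (ord2P i) => ->.
  rewrite (@lh_diff _ _ ord0 ord_max) //.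
  set L := loss_hat gamma ell t p ord0 ord0.
  case=> h0 h1 hs /andP [hL0 hL1].
  have H1 := mulr_ge0 (mulr_ge0 h0 h1) hL0.
  have H2 := mulr_ge0 (mulr_ge0 h0 h0) hL0.
  have H3 := mulr_ge0 (mulr_ge0 h1 h1) hL0.
  have H4 : 0 <= p ord0 * (1/2 - eta * L) by apply: mulr_ge0 => //; lra.
  have H5 : 0 <= p ord_max * (1/2 - eta * L) by apply: mulr_ge0 => //; lra.
  split; nra.
rewrite (@lh_diff _ _ ord_max ord0) //.
set L := loss_hat gamma ell t p ord_max ord_max.
case=> h0 h1 hs /andP [hL0 hL1].
have H1 := mulr_ge0 (mulr_ge0 h0 h1) hL0.
have H2 := mulr_ge0 (mulr_ge0 h0 h0) hL0.
have H3 := mulr_ge0 (mulr_ge0 h1 h1) hL0.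
have H4 : 0 <= p ord0 * (1/2 - eta * L) by apply: mulr_ge0 => //; lra.
have H5 : 0 <= p ord_max * (1/2 - eta * L) by apply: mulr_ge0 => //; lra.
split; nra.
Qed.

Lemma inv_run t p s : inv p -> inv (pi_run eta gamma ell t p s).
Proof. by elim: s t p => [|i s IH] t p hp //=; apply: IH; apply: step_inv. Qed.

Lemma pp_ge0 t p s : inv p -> 0 <= path_prob eta gamma ell t p s.
Proof.
elim: s t p => [|i s IH] t p hp /=; first by [].
apply: mulr_ge0; last by apply: IH; apply: step_inv.
apply: le_trans (tilde_gt0 i hp); apply: divr_ge0; hyps; lra.
Qed.

Lemma Ex_ge0 n t p F : inv p -> (forall s, 0 <= F s) -> 0 <= Ex n t p F.
Proof. by move=> hp hF; apply: sumr_ge0 => s _; apply: mulr_ge0 => //; apply: pp_ge0. Qed.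

Lemma Ex_const n t p c : inv p -> Ex n t p (fun _ => c) = c.
Proof.
elim: n t p => [|n IH] t p hp; first by rewrite Ex0.
rewrite Ex_cons sum2 !IH; try by apply: step_inv.
by rewrite -mulrDl tilde_sum // mul1r.
Qed.

Lemma Ex_zero n t p : Ex n t p (fun _ => 0) = 0.
Proof. by rewrite /Ex big1 // => s _; rewrite mulr0. Qed.


Variable t0 : nat.
Hypothesis hph : forall t, (t0 <= t)%N -> ell t ord0 = 0 /\ ell t ord_max = 1.


Notation step := (wsu_step eta gamma ell).
Notation w := (tilde_pi gamma).

Lemma w_pos p i : inv p -> 0 < w p i.
Proof.
move=> hp; apply: lt_le_trans (tilde_gt0 i hp).
by apply: divr_gt0.
Qed.

Lemma step0_val t p : (t0 <= t)%N -> step t p ord0 ord0 = p ord0.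
Proof.
move=> ht; have [h0 _] := hph ht.
by rewrite /wsu_step step_sum lh_same h0 !mul0r mulr0 subrr mulr0 subr0 mulr1.
Qed.

Lemma step1_val t p : (t0 <= t)%N -> inv p ->
  step t p ord_max ord0 = p ord0 * (w p ord_max + eta * p ord_max) / w p ord_max.
Proof.
move=> ht hp; have [_ h1] := hph ht.
have hw := w_pos ord_max hp.
rewrite /wsu_step step_sum (@lh_diff _ _ ord_max ord0) // lh_same h1.
field; by rewrite gt_eqF.
Qed.

Lemma mono t p s : (t0 <= t)%N -> inv p ->
  p ord0 <= pi_run eta gamma ell t p s ord0.
Proof.
elim: s t p => [|i s IH] t p ht hp //=.
apply: le_trans (IH _ _ (leqW ht) (step_inv t i hp)).
case: (ord2P i) => ->; first by rewrite step0_val.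
rewrite step1_val //.
have hw := w_pos ord_max hp.
case: hp => h0 h1 _.
rewrite ler_pdivlMr //.
have : 0 <= p ord0 * (eta * p ord_max).
  by apply: mulr_ge0 => //; apply: mulr_ge0 => //; hyps; lra.
nra.
Qed.

Lemma key_ineq b w1 : 1/4 <= b -> b <= 1 -> w1 = (1 - gamma) * b + gamma / 2%:R ->
  w1 ^+ 3 <= (w1 - eta / 4%:R) * (w1 + eta * b) ^+ 2.
Proof.
move=> hb hb1 hw.
have he := eta_le.
hyps.
have hw0 : 0 < w1 by rewrite hw; nra.
set z := eta * b.
have hz : 0 <= z by rewrite /z; nra.
have hz4 : eta / 4%:R <= z by rewrite /z; nra.
have h2z : 2%:R * z <= w1.
  rewrite /z hw; have : eta <= gamma / 4%:R by [].
  move=> h; nra.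
have H1 : 0 <= (z - eta / 4%:R) * (w1 + z) ^+ 2.
  by apply: mulr_ge0; [lra | apply: sqr_ge0].
have H2 : 0 <= z * ((w1 - 2%:R * z) * (w1 + z) + z ^+ 2).
  apply: mulr_ge0 => //; apply: addr_ge0; last exact: sqr_ge0.
  by apply: mulr_ge0; lra.
nra.
Qed.


Lemma Ex_ext n t p F G : (forall s, F s = G s) -> Ex n t p F = Ex n t p G.
Proof. by move=> h; rewrite /Ex; apply: eq_bigr => s _; rewrite h. Qed.

Lemma final_alg (a b w1 E x C : R) : 0 < a -> 0 <= C -> 0 <= E -> 0 < w1 ->
  0 < w1 + eta * b -> 1 - eta / 4%:R <= x ->
  w1 ^+ 3 <= (w1 - eta / 4%:R) * (w1 + eta * b) ^+ 2 ->
  (1 - w1) * (C / a ^+ 2 * E) + w1 * (C / (a * (w1 + eta * b) / w1) ^+ 2 * E)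
  <= C / a ^+ 2 * (E * x).
Proof.
move=> ha hC hE hw1 hwz hx hk.
have hK : 0 <= C / a ^+ 2 by apply: divr_ge0 => //; apply: exprn_ge0; apply: ltW.
have step1 : w1 * (C / (a * (w1 + eta * b) / w1) ^+ 2) <= (w1 - eta / 4%:R) * (C / a ^+ 2).
  have -> : w1 * (C / (a * (w1 + eta * b) / w1) ^+ 2) =
            (C / a ^+ 2) * (w1 ^+ 3 / (w1 + eta * b) ^+ 2).
    by field; apply/and3P; split; rewrite ?gt_eqF.
  rewrite [X in _ <= X]mulrC; apply: ler_wpM2l => //.
  by rewrite ler_pdivrMr // exprn_gt0.
set K := C / a ^+ 2 in hK step1 *.
set M := w1 * (C / (a * (w1 + eta * b) / w1) ^+ 2) in step1 *.
have -> : (1 - w1) * (K * E) + w1 * (C / (a * (w1 + eta * b) / w1) ^+ 2 * E)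
   = ((1 - w1) * K + M) * E by rewrite /M; ring.
have H3 : ((1 - w1) * K + M) * E <= (K * (1 - eta / 4%:R)) * E.
  by apply: ler_wpM2r => //; lra.
apply: le_trans H3 _.
rewrite mulrA [X in _ <= X]mulrAC; apply: ler_wpM2r => //.
by apply: ler_wpM2l.
Qed.

Definition C9 : R := 9%:R / 16%:R.

Lemma tail n t p : (t0 <= t)%N -> inv p -> 1/4 <= p ord0 ->
  Ex n t p (fun s => (pi_run eta gamma ell t p s ord0 <= 3/4)%R%:R)
  <= C9 / (p ord0) ^+ 2 * expR (- (eta / 4%:R) * n%:R).
Proof.
have hC : 0 <= C9 by rewrite /C9; apply: divr_ge0.
elim: n t p => [|n IH] t p ht hp ha.
  rewrite Ex0 /= mulr0 expR0 mulr1.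
  have ha0 : 0 < p ord0 ^+ 2 by apply: exprn_gt0; lra.
  case: (lerP (p ord0) (3/4)) => h34 /=.
    rewrite ler_pdivlMr // mul1r /C9.
    have : p ord0 ^+ 2 <= 9%:R / 16%:R by rewrite expr2; nra.
    lra.
  by apply: divr_ge0 => //; apply: ltW.
have ha0 : 0 < p ord0 by lra.
have hE : 0 <= expR (- (eta / 4%:R) * n%:R) by apply: ltW; apply: expR_gt0.
have hR : 0 <= C9 / p ord0 ^+ 2 * expR (- (eta / 4%:R) * n.+1%:R).
  apply: mulr_ge0; last by apply: ltW; apply: expR_gt0.
  by apply: divr_ge0 => //; apply: exprn_ge0; apply: ltW.
case: (lerP (p ord0) (3/4)) => h34; last first.
  have -> : Ex n.+1 t p (fun s => (pi_run eta gamma ell t p s ord0 <= 3/4)%R%:R)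
     = Ex n.+1 t p (fun _ => 0).
    apply: Ex_ext => s.
    have h1 := @mono t p s ht hp.
    by rewrite leNgt (lt_le_trans h34 h1).
  by rewrite Ex_zero.
rewrite Ex_cons sum2.
have hw0 := w_pos ord0 hp; have hw1 := w_pos ord_max hp.
have hp0 := step_inv t ord0 hp; have hp1 := step_inv t ord_max hp.
have q0E := @step0_val t p ht.
have q1E := @step1_val t p ht hp.
have hq0 : 1/4 <= step t p ord0 ord0 by rewrite q0E.
have hq1 : 1/4 <= step t p ord_max ord0.
  by apply: le_trans (mono [:: ord_max] ht hp).
have I0 := IH t.+1 _ (leqW ht) hp0 hq0.
have I1 := IH t.+1 _ (leqW ht) hp1 hq1.
apply: le_trans (lerD (ler_wpM2l (ltW hw0) I0) (ler_wpM2l (ltW hw1) I1)) _.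
rewrite q0E q1E.
have hsum := tilde_sum hp.
have hw0E : w p ord0 = 1 - w p ord_max by lra.
rewrite hw0E.
have -> : (n.+1)%:R = n%:R + 1 :> R by rewrite -natr1.
rewrite (mulrDr (- (eta / 4%:R))) expRD.
have hx := expR_ge1Dx (- (eta / 4%:R) * 1).
case: hp => hpa hpb hab.
have hb : 1/4 <= p ord_max by lra.
have hkey' := @key_ineq (p ord_max) (w p ord_max) hb (ltac:(lra)) erefl.
have hwz : 0 < w p ord_max + eta * p ord_max by have := mulr_ge0 (ltW heta) hpb; lra.
apply: final_alg => //; lra.
Qed.


Lemma prefix m : forall N n t p (F G : seq 'I_2 -> R) (C : R), N = (m + n)%N -> inv p ->
  (forall u : seq 'I_2, size u = m -> inv (pi_run eta gamma ell t p u) ->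
    Ex n (t + m) (pi_run eta gamma ell t p u) (fun v => F (u ++ v))
    <= C * Ex n (t + m) (pi_run eta gamma ell t p u) (fun v => G (u ++ v))) ->
  Ex N t p F <= C * Ex N t p G.
Proof.
elim: m => [|m IH] N n t p F G C e hp h.
  rewrite add0n in e; subst N.
  by have := h [::] erefl hp; rewrite addn0.
rewrite addSn in e; subst N.
rewrite !Ex_cons !sum2 mulrDr.
apply: lerD; rewrite mulrCA; (apply: ler_wpM2l; first by apply: ltW; exact: w_pos);
  (apply: (IH _ n) => //; first exact: step_inv);
  move=> u hu hi; rewrite addSnnS; apply: (h (_ :: u)) => //=; by rewrite hu.
Qed.

End Dyn.

Lemma pi_run_cat (R : realType) (K : nat) (eta gamma : R) ell t (p : 'I_K -> R) u v :
  pi_run eta gamma ell t p (u ++ v) = pi_run eta gamma ell (t + size u) (pi_run eta gamma ell t p u) v.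
Proof.
by elim: u t p => [|i u IH] t p /=; rewrite ?addn0 // IH addSnnS.
Qed.


Lemma wsu_Ex (R : realType) (eta gamma : R) ell N (X : pred (N.-tuple 'I_2)) (f : seq 'I_2 -> bool) :
  (forall s : N.-tuple 'I_2, X s = f s) ->
  wsu_prob eta gamma ell X = Ex eta gamma ell N 1 (@pi_init R 2) (fun s => (f s)%:R).
Proof.
move=> h; rewrite /wsu_prob /Ex big_mkcond; apply: eq_bigr => s _.
by rewrite h; case: (f s); rewrite ?mulr1 ?mulr0.
Qed.

Theorem mainTheorem19 (R : realType) (eta gamma : nat -> R) :
  (forall T : nat, (0 < T)%N -> (100 %| T)%N ->
     valid_pair 2 (eta T) (gamma T) /\ nontrivial_regime T (eta T) (gamma T)) ->
  exists T0 : nat, forall T : nat, (T0 <= T)%N -> (0 < T)%N -> (100 %| T)%N ->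
    let P := wsu_prob (eta T) (gamma T) (two_phase_loss R T) (T := T) in
    let E2 := fun s : T.-tuple 'I_2 =>
      1/4 <= pi_at (eta T) (gamma T) (two_phase_loss R T) s (T1 T + T2 T) ord0 in
    let A := fun s : T.-tuple 'I_2 =>
      pi_at (eta T) (gamma T) (two_phase_loss R T) s T ord0 <= 3/4 in
    0 < P E2 ->
    P (fun s => A s && E2 s) / P E2
      <= 75/4 * expR (- (79/400) * eta T * T%:R).
Proof.
move=> hyp; exists 0%N => T _ hT hdiv P E2 A hP.
case: (hyp T hT hdiv) => [[he he2 hg hg2 hr] _].
set ell := two_phase_loss R T.
have hell : forall t i, 0 <= ell t i <= 1.
  by move=> t i; rewrite /ell /two_phase_loss; case: ifP => _; [case: (i == ord0) | case: (i != ord0)]; rewrite /= ?lexx ?ler01.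
set m := (T1 T + T2 T)%N.
have [k hk] : exists k, T = (k * 100)%N by exists (T %/ 100)%N; rewrite divnK.
have hm : m = (k * 21)%N.
  rewrite /m /T1 /T2 hk mulnK //.
  have -> : (2 * (k * 100) = k * 20 * 10)%N by lia.
  rewrite mulnK //; lia.
rewrite ler_pdivrMr //.
set C := 75/4 * expR _.
set init := @pi_init R 2.
have hP1 : P E2 = Ex (eta T) (gamma T) ell T 1 init
   (fun u => (1/4 <= pi_run (eta T) (gamma T) ell 1 init (take m u) ord0)%R%:R).
  exact: wsu_Ex.
have hP2 : P (fun s => A s && E2 s) = Ex (eta T) (gamma T) ell T 1 init
   (fun u => ((pi_run (eta T) (gamma T) ell 1 init u ord0 <= 3/4) &&
              (1/4 <= pi_run (eta T) (gamma T) ell 1 init (take m u) ord0))%R%:R).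
  apply: wsu_Ex => s.
  by rewrite /A /E2 /pi_at take_oversize // size_tuple.
rewrite hP1 hP2.
have hinit : inv init by split; rewrite /init /pi_init; lra.
have hph : forall t, ((T1 T).+1 <= t)%N -> ell t ord0 = 0 /\ ell t ord_max = 1.
  move=> t ht; rewrite /ell /two_phase_loss.
  have -> : (t <= T %/ 100)%N = false by rewrite /T1 in ht; apply/negbTE; rewrite -ltnNge.
  by split.
apply: (prefix he hg hg2 hr hell (m := m) (n := (k * 79)%N)) => //.
  rewrite hk hm; lia.
move=> u hu hi.
set q := pi_run (eta T) (gamma T) ell 1 init u.
have ht : ((T1 T).+1 <= 1 + m)%N by rewrite /m; lia.
case h: (1/4 <= q ord0).
  rewrite (Ex_ext _ _ _ _ _ _ (G := fun v => (pi_run (eta T) (gamma T) ell (1 + m) q v ord0 <= 3/4)%R%:R)); last first.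
    by move=> v; rewrite -hu take_size_cat // h andbT pi_run_cat.
  rewrite [X in _ <= _ * X](Ex_ext _ _ _ _ _ _ (G := fun _ => 1)); last first.
    by move=> v; rewrite -hu take_size_cat // h.
  rewrite (Ex_const he hg hg2 hr hell) // mulr1.
  apply: le_trans (tail he hg hg2 hr hell hph (k * 79) ht hi h) _.
  have eT : (T%:R : R) = k%:R * 100%:R by rewrite hk natrM.
  rewrite /C.
  have -> : - (79/400) * eta T * T%:R = - (eta T / 4%:R) * (k * 79)%:R.
    by rewrite eT natrM; field.
  apply: ler_wpM2r; first by apply: ltW; apply: expR_gt0.
  have hq : 0 < q ord0 ^+ 2 by apply: exprn_gt0; lra.
  rewrite /C9 ler_pdivrMr //.
  have : 1/16 <= q ord0 ^+ 2 by rewrite expr2; nra.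
  rewrite -/q.
  lra.
rewrite (Ex_ext _ _ _ _ _ _ (G := fun _ => 0)); last first.
  by move=> v; rewrite -hu take_size_cat // h andbF.
rewrite [X in _ <= _ * X](Ex_ext _ _ _ _ _ _ (G := fun _ => 0)); last first.
  by move=> v; rewrite -hu take_size_cat // h.
by rewrite !Ex_zero mulr0.
Qed.
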